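(* Let $G$ be a reflexive graph, and suppose that an edge $vv'$ of $G$ avoids a walk $u_0u_1\dots u_t$ ($t\ge1$) in $G$. Then: 1. If neither $\{u_0,u_1,v,v'\}$ nor $\{u_{t-1},u_t,v,v'\}$ induces a $C_4$, then $(u_0,x)\sim(u_t,y)$ for all $x\in\{v,v'\}$ and $y\in\{v,v'\}$. 2. If $\{u_0,u_1,v,v'\}$ induces a $C_4$ and $\{u_{t-1},u_t,v,v'\}$ does not, then $(u_0,x)\sim(u_t,y)$ for every $y\in\{v,v'\}$, where $x$ is the unique vertex of $\{v,v'\}$ with $u_0x\in E(G)$. 3. If both $\{u_0,u_1,v,v'\}$ and $\{u_{t-1},u_t,v,v'\}$ induce a $C_4$, then $(u_0,x)\sim(u_t,y)$, where $x$ is the unique vertex of $\{v,v'\}$ with $u_0x\in E(G)$ and $y$ is the unique vertex of $\{v,v'\}$ with $u_ty\in E(G)$.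
   Context: A graph is reflexive if every vertex carries a loop; its edge set $E(G)$ contains all loops $vv$, and an ''edge'' $uu'$ may be a loop ($u=u'$). A walk $u_0u_1\dots u_t$ ($t\ge 1$) is a sequence of vertices with $u_ju_{j+1}\in E(G)$ for all $j$ (consecutive vertices may coincide); its edges are $u_ju_{j+1}$. $Z(G)$ is the set of ordered pairs $(u,v)$ of distinct vertices of $G$. For $(u,v),(u',v')\in Z(G)$, $(u,v)$ forces $(u',v')$, written $(u,v)\Lambda(u',v')$, if either $u=u'$ and $v=v'$, or $uu'\in E(G)$, $vv'\in E(G)$, $uv'\notin E(G)$ and $vu'\notin E(G)$. We write $(u,v)\sim(u',v')$ ($(u,v)$ implies $(u',v')$) if there are walks $w_1w_2\dots w_m$ and $z_1z_2\dots z_m$ in $G$ with $(w_1,z_1)=(u,v)$, $(w_m,z_m)=(u',v')$ and $(w_j,z_j)\Lambda(w_{j+1},z_{j+1})$ for $j=1,\dots,m-1$; this is an equivalence relation on $Z(G)$. For edges $uu'$, $vv'$ of a reflexive graph $G$ with $\{u,u'\}\cap\{v,v'\}=\emptyset$, $uu'$ avoids $vv'$ if one of the following holds: (i) $u=u'$, $v=v'$, $uv\notin E(G)$; (ii) $u=u'$, $v\ne v'$, $uv\notin E(G)$ and $uv'\notin E(G)$; (iii) $u\ne u'$, $v=v'$, $uv\notin E(G)$ and $u'v\notin E(G)$; (iv) $u\ne u'$, $v\ne v'$, and $\{u,u',v,v'\}$ induces a $2K_2$, a $P_4$, or a $C_4$ in $G$. An edge avoids a walk if it avoids every edge of the walk.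 *)

(* Defs.v *)
From mathcomp Require Import all_boot.
Set Implicit Arguments. Unset Strict Implicit. Unset Printing Implicit Defensive.

Definition reflexive_graph (T : finType) (e : rel T) : Prop :=
  (forall x, e x x) /\ (forall x y, e x y = e y x).

Definition forces (T : finType) (e : rel T) (p q : T * T) : Prop :=
  (p.1 = q.1 /\ p.2 = q.2) \/
  (e p.1 q.1 /\ e p.2 q.2 /\ ~~ e p.1 q.2 /\ ~~ e p.2 q.1).

Definition inZ (T : finType) (p : T * T) : Prop := p.1 <> p.2.

(* (u,v) implies (u',v'): there are walks w_1..w_m, z_1..z_m with
   (w_1,z_1) = (u,v), (w_m,z_m) = (u',v') and consecutive pairs forcing.
   The sequence of pairs is (u,v) :: s. *)
Definition impliesZ (T : finType) (e : rel T) (p q : T * T) : Prop :=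
  exists s : seq (T * T),
    [/\ inZ p /\ (forall r, r \in s -> inZ r),
        path e p.1 (map fst s) /\ path e p.2 (map snd s),
        (forall i, i < size s ->
           forces e (nth p (p :: s) i) (nth p s i))
      & last p s = q].

Definition induces_C4 (T : finType) (e : rel T) (S : {set T}) : Prop :=
  exists a b c d, [/\ S = [set a; b; c; d], #|S| = 4,
    [&& e a b, e b c, e c d & e d a] & ~~ e a c && ~~ e b d].

Definition induces_P4 (T : finType) (e : rel T) (S : {set T}) : Prop :=
  exists a b c d, [/\ S = [set a; b; c; d], #|S| = 4,
    [&& e a b, e b c & e c d] & [&& ~~ e a c, ~~ e b d & ~~ e a d]].

Definition induces_2K2 (T : finType) (e : rel T) (S : {set T}) : Prop :=
  exists a b c d, [/\ S = [set a; b; c; d], #|S| = 4,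
    e a b && e c d & [&& ~~ e a c, ~~ e a d, ~~ e b c & ~~ e b d]].

Definition avoids (T : finType) (e : rel T) (u u' v v' : T) : Prop :=
  [/\ u <> v, u <> v', u' <> v & u' <> v'] /\
  [\/ [/\ u = u', v = v' & ~~ e u v],
      [/\ u = u', v <> v', ~~ e u v & ~~ e u v'],
      [/\ u <> u', v = v', ~~ e u v & ~~ e u' v] |
      [/\ u <> u', v <> v' &
         induces_2K2 e [set u; u'; v; v'] \/ induces_P4 e [set u; u'; v; v']
         \/ induces_C4 e [set u; u'; v; v']]].

Definition is_walk (T : finType) (e : rel T) (u : nat -> T) (t : nat) : Prop :=
  0 < t /\ forall j, j < t -> e (u j) (u j.+1).

Definition avoids_walk (T : finType) (e : rel T) (v v' : T)
    (u : nat -> T) (t : nat) : Prop :=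
  forall j, j < t -> avoids e v v' (u j) (u j.+1).

(* Main.v *)
Require Import Defs.
From mathcomp Require Import all_boot.
Set Implicit Arguments. Unset Strict Implicit. Unset Printing Implicit Defensive.

Definition stepZ (T : finType) (e : rel T) (p q : T * T) : Prop :=
  [/\ inZ q, e p.1 q.1, e p.2 q.2, ~~ e p.1 q.2 & ~~ e p.2 q.1].

Fixpoint chainZ (T : finType) (e : rel T) (p : T * T) (s : seq (T * T)) : Prop :=
  match s with
  | [::] => inZ p
  | r :: s' => [/\ inZ p, stepZ e p r & chainZ e r s']
  end.

Definition RZ (T : finType) (e : rel T) (p q : T * T) : Prop :=
  exists s, chainZ e p s /\ last p s = q.

Lemma chainZ_inZ (T : finType) (e : rel T) p s : chainZ e p s -> inZ p.
Proof. by case: s => [|r s] //= []. Qed.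

Lemma chainZ_impl (T : finType) (e : rel T) s p :
  chainZ e p s -> impliesZ e p (last p s).
Proof.
elim: s p => [|r s IH] p /=.
  move=> H; exists [::]; split => //.
move=> [Hp [Hr H1 H2 H3 H4] Hc].
have [s' [[Hr' Hs'] [P1 P2] Hn Hl]] := IH r Hc.
exists (r :: s'); split => //=.
- split => // r0; rewrite inE => /orP [/eqP -> //|]; exact: Hs'.
- by rewrite H1 H2.
- case=> [|k] /= Hk.
    by right.
  have := Hn k Hk. rewrite (set_nth_default r p Hk).
  rewrite (set_nth_default r p (_ : k < size (r :: s'))) //; last by rewrite /= ltnW.
Qed.

Lemma RZ_impl (T : finType) (e : rel T) p q : RZ e p q -> impliesZ e p q.
Proof. by move=> [s [Hc <-]]; exact: chainZ_impl. Qed.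

Lemma RZ_refl (T : finType) (e : rel T) p : inZ p -> RZ e p p.
Proof. by move=> H; exists [::]. Qed.

Lemma RZ_step (T : finType) (e : rel T) p q : inZ p -> stepZ e p q -> RZ e p q.
Proof. move=> Hp [*]; exists [:: q] => /=; split => //. Qed.

Lemma chainZ_cat (T : finType) (e : rel T) s1 s2 p :
  chainZ e p s1 -> chainZ e (last p s1) s2 -> chainZ e p (s1 ++ s2).
Proof.
elim: s1 p => [|r s1 IH] p //=.
move=> [Hp Hs Hc] H; split => //; exact: IH.
Qed.

Lemma RZ_trans (T : finType) (e : rel T) p q r : RZ e p q -> RZ e q r -> RZ e p r.
Proof.
move=> [s1 [H1 E1]] [s2 [H2 E2]]; exists (s1 ++ s2); split.
  by apply: chainZ_cat => //; rewrite E1.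
by rewrite last_cat E1.
Qed.

Ltac splitb := repeat match goal with
  | H : is_true (_ && _) |- _ => case/andP: H => ? ?
  end.

Lemma shape_nn (T : finType) (e : rel T) (S : {set T}) :
  (forall x y, e x y = e y x) ->
  induces_2K2 e S \/ induces_P4 e S \/ induces_C4 e S ->
  forall z, z \in S -> exists2 w, w \in S & ~~ e z w.
Proof.
move=> sym [|[]] [a [b [c [d [-> _ H1 H2]]]]] z;
  rewrite !inE => /orP[/orP[/orP[|]|]|] /eqP ->; splitb.
- by exists c; rewrite ?inE ?eqxx ?orbT.
- by exists c; rewrite ?inE ?eqxx ?orbT.
- by exists a; rewrite ?inE ?eqxx ?orbT // sym.
- by exists a; rewrite ?inE ?eqxx ?orbT // sym.
- by exists c; rewrite ?inE ?eqxx ?orbT.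
- by exists d; rewrite ?inE ?eqxx ?orbT.
- by exists a; rewrite ?inE ?eqxx ?orbT // sym.
- by exists a; rewrite ?inE ?eqxx ?orbT // sym.
- by exists c; rewrite ?inE ?eqxx ?orbT.
- by exists d; rewrite ?inE ?eqxx ?orbT.
- by exists a; rewrite ?inE ?eqxx ?orbT // sym.
- by exists b; rewrite ?inE ?eqxx ?orbT // sym.
Qed.

Definition facts (T : finType) (e : rel T) (v v' a a' : T) :=
  [/\ [/\ a != v, a != v', a' != v & a' != v'],
      ~~ (e a v && e a v'), ~~ (e a' v && e a' v'),
      ~~ (e a v && e a' v) & ~~ (e a v' && e a' v')].

Lemma facts_of (T : finType) (e : rel T) (v v' a a' : T) :
  reflexive_graph e -> e v v' -> e a a' -> avoids e v v' a a' ->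
  facts e v v' a a'.
Proof.
move=> [refl sym] evv eaa [[d1 d2 d3 d4] H].
have D: [/\ a != v, a != v', a' != v & a' != v'].
  by split; apply/eqP => E; subst.
have ns : forall x y, ~~ e x y -> ~~ e y x by move=> x y; rewrite sym.
case: H.
- move=> [E1 E2 H]; subst; have h := ns _ _ H; split => //; by rewrite (negbTE h).
- move=> [E1 _ H1 H2]; subst; have h1 := ns _ _ H1; have h2 := ns _ _ H2.
  by split => //; rewrite ?(negbTE h1) ?(negbTE h2) ?andbF.
- move=> [_ E1 H1 H2]; subst; have h1 := ns _ _ H1; have h2 := ns _ _ H2.
  by split => //; rewrite ?(negbTE h1) ?(negbTE h2) ?andbF.
- move=> [_ _ Hs]; have NN := shape_nn sym Hs.
  have mem : forall w, w \in [set v; v'; a; a'] -> [\/ w = v, w = v', w = a | w = a'].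
    by move=> w; rewrite !inE => /orP[/orP[/orP[|]|]|] /eqP ->; [constructor 1|constructor 2|constructor 3|constructor 4].
  have inS : [/\ v \in [set v; v'; a; a'], v' \in [set v; v'; a; a'],
                 a \in [set v; v'; a; a'] & a' \in [set v; v'; a; a']].
    by rewrite !inE !eqxx ?orbT.
  case: inS => iv iv' ia ia'.
  split => //; apply/negP => /andP [h1 h2].
  + have [w /mem [] -> ] := NN a ia; by rewrite ?refl ?h1 ?h2 ?eaa.
  + have [w /mem [] -> ] := NN a' ia'; by rewrite ?refl ?h1 ?h2 ?(sym a') ?eaa.
  + have [w /mem [] -> ] := NN v iv; by rewrite ?refl ?evv ?(sym v) ?h1 ?h2.
  + have [w /mem [] -> ] := NN v' iv'; by rewrite ?refl ?(sym v') ?evv ?h1 ?h2.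
Qed.

Lemma card4 (T : finType) (a b c d : T) :
  a != b -> a != c -> a != d -> b != c -> b != d -> c != d ->
  #|[set a; b; c; d]| = 4.
Proof.
move=> ab ac ad bc bd cd.
rewrite setUC cardsU1 [_ :|: [set c]]setUC cardsU1 cardsU1 cards1 !inE.
rewrite (eq_sym d c) (eq_sym d a) (eq_sym d b) (eq_sym c a) (eq_sym c b).
by rewrite (negbTE ab) (negbTE ac) (negbTE ad) (negbTE bc) (negbTE bd) (negbTE cd).
Qed.

Definition NP (T : finType) (e : rel T) (v v' w : T) := ~~ e w v && ~~ e w v'.

Lemma eL (T : finType) (e : rel T) (v v' : T) :
  reflexive_graph e -> e v v' -> forall b c, b \in [:: v; v'] -> c \in [:: v; v'] -> e b c.
Proof.
move=> [refl sym] evv b c; rewrite !inE => /orP[] /eqP -> /orP[] /eqP -> //.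
by rewrite sym.
Qed.

Lemma nL (T : finType) (e : rel T) (v v' w : T) :
  NP e v v' w -> forall c, c \in [:: v; v'] -> ~~ e w c.
Proof. by move=> /andP[h1 h2] c; rewrite !inE => /orP[] /eqP ->. Qed.

Lemma merge (T : finType) (e : rel T) (v v' w : T) :
  reflexive_graph e -> e v v' -> w != v -> w != v' -> NP e v v' w ->
  forall b c, b \in [:: v; v'] -> c \in [:: v; v'] -> RZ e (w, b) (w, c).
Proof.
move=> [refl sym] evv wv wv' np b c hb hc.
have nin : forall z, z \in [:: v; v'] -> w <> z.
  by move=> z; rewrite !inE => /orP[] /eqP -> /eqP; apply/negP.
have [->|bc] := eqVneq b c; first by apply: RZ_refl; exact: nin.
apply: RZ_step; first exact: nin.
split => //=; first exact: nin.
- exact: (eL (conj refl sym) evv).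
- exact: (nL np).
- by rewrite sym (nL np).
Qed.

Definition np0 (T : finType) (e : rel T) (v v' w : T) := if e w v then v' else v.
Definition pp0 (T : finType) (e : rel T) (v v' w : T) := if e w v then v else v'.

Lemma np0P (T : finType) (e : rel T) (v v' w : T) :
  ~~ (e w v && e w v') -> np0 e v v' w \in [:: v; v'] /\ ~~ e w (np0 e v v' w).
Proof.
rewrite /np0; case: (boolP (e w v)) => h /=; rewrite ?inE ?eqxx ?orbT //.
Qed.

Lemma pp0P (T : finType) (e : rel T) (v v' w : T) :
  ~~ (e w v && e w v') -> pp0 e v v' w \in [:: v; v'] /\
   (forall c, c \in [:: v; v'] -> e w c -> c = pp0 e v v' w).
Proof.
rewrite /pp0; case: (boolP (e w v)) => h /= H; rewrite ?inE ?eqxx ?orbT; split => // c;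
  rewrite !inE => /orP[] /eqP -> // h2.
by rewrite h2 in H.
by rewrite h2 in h.
Qed.

Lemma allEq (T : finType) (e : rel T) (v v' a a' : T) :
  reflexive_graph e -> e v v' -> e a a' -> facts e v v' a a' ->
  NP e v v' a \/ NP e v v' a' ->
  forall b c, b \in [:: v; v'] -> c \in [:: v; v'] -> RZ e (a, b) (a', c).
Proof.
move=> G evv eaa [[d1 d2 d3 d4] f1 f2 f3 f4] H b c hb hc.
have [refl sym] := G.
have nin : forall w z, w != v -> w != v' -> z \in [:: v; v'] -> w <> z.
  by move=> w z h1 h2; rewrite !inE => /orP[] /eqP -> /eqP; apply/negP.
case: H => np.
- have [h1 h2] := np0P f2.
  apply: RZ_trans (merge G evv d1 d2 np hb h1) _.
  apply: RZ_step; first exact: nin.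
  split => //=; first exact: nin.
  + exact: (eL G evv).
  + exact: (nL np).
  + by rewrite sym.
- have [h1 h2] := np0P f1.
  apply: RZ_trans _ (merge G evv d3 d4 np h1 hc).
  apply: RZ_step; first exact: (nin a b).
  split => //=; first exact: nin.
  + exact: (eL G evv).
  + by rewrite sym (nL np).
Qed.

Definition Gd (T : finType) (e : rel T) (v v' : T) (X : T * T) (a : T) :=
  forall b, b \in [:: v; v'] -> (forall c, c \in [:: v; v'] -> e a c -> c = b) ->
    RZ e X (a, b).

Lemma gd_match (T : finType) (e : rel T) (v v' a a' p p' : T) X :
  reflexive_graph e -> e v v' -> e a a' -> facts e v v' a a' ->
  p \in [:: v; v'] -> p' \in [:: v; v'] ->
  (forall c, c \in [:: v; v'] -> c = p \/ c = p') ->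
  e a p -> e a' p' -> ~~ e a p' -> ~~ e a' p ->
  Gd e v v' X a -> Gd e v v' X a'.
Proof.
move=> G evv eaa [[d1 d2 d3 d4] _ _ _ _] hp hp' cov h1 h2 h3 h4 Hg c hc Gc.
have [refl sym] := G.
have nin : forall w z, w != v -> w != v' -> z \in [:: v; v'] -> w <> z.
  by move=> w z k1 k2; rewrite !inE => /orP[] /eqP -> /eqP; apply/negP.
have <- := Gc p' hp' h2.
apply: RZ_trans (Hg p hp _) _.
  by move=> z hz ez; case: (cov z hz) => // E; subst z; rewrite ez in h3.
apply: RZ_step; first exact: nin.
split => //=; first exact: nin.
- exact: (eL G evv).
- by rewrite sym.
Qed.

Lemma gd_step (T : finType) (e : rel T) (v v' a a' : T) X :
  reflexive_graph e -> e v v' -> e a a' -> facts e v v' a a' ->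
  Gd e v v' X a -> Gd e v v' X a'.
Proof.
move=> G evv eaa F Hg.
have [D f1 f2 f3 f4] := F.
have cov : forall c, c \in [:: v; v'] -> c = v \/ c = v'.
  by move=> c; rewrite !inE => /orP[] /eqP ->; [left|right].
have hv : v \in [:: v; v'] by rewrite inE eqxx.
have hv' : v' \in [:: v; v'] by rewrite !inE eqxx orbT.
case: (boolP (NP e v v' a || NP e v v' a')) => [/orP H|/norP [n1 n2]].
  move=> c hc _.
  have [hp Gp] := pp0P f1.
  apply: RZ_trans (Hg _ hp Gp) _.
  exact: (allEq G evv eaa F H hp hc).
move: n1 n2 f1 f2 f3 f4; rewrite /NP !negb_and !negbK.
case ha: (e a v); case hb: (e a v'); case hc: (e a' v); case hd: (e a' v') => //= *.
- apply: (gd_match G evv eaa F hv hv' cov) => //; by rewrite ?hb ?hc.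
- have cov' : forall c, c \in [:: v; v'] -> c = v' \/ c = v.
    by move=> c /cov [];[right|left].
  apply: (gd_match G evv eaa F hv' hv cov') => //; by rewrite ?ha ?hd.
Qed.

Lemma notC4_NP (T : finType) (e : rel T) (v v' a a' : T) :
  reflexive_graph e -> e v v' -> e a a' -> facts e v v' a a' ->
  ~ induces_C4 e [set a; a'; v; v'] -> NP e v v' a \/ NP e v v' a'.
Proof.
move=> [refl sym] evv eaa [[d1 d2 d3 d4] f1 f2 f3 f4] nC.
case: (boolP (NP e v v' a || NP e v v' a')) => [/orP //|/norP [n1 n2]].
exfalso; apply: nC.
move: n1 n2 f1 f2 f3 f4; rewrite /NP !negb_and !negbK.
case ha: (e a v); case hb: (e a v'); case hc: (e a' v); case hd: (e a' v') => //= *.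
- have aa : a != a' by apply/eqP => E; subst; rewrite ha in hc.
  have vv : v != v' by apply/eqP => E; subst; rewrite ha in hb.
  exists a, a', v', v; split.
  + apply/setP => z; rewrite !inE; case: (z == a) (z == a') (z == v) (z == v') => [] [] [] [] //.
  + by rewrite card4.
  + by rewrite eaa hd (sym v') evv (sym v) ha.
  + by rewrite hb hc.
- have aa : a != a' by apply/eqP => E; subst; rewrite hb in hd.
  have vv : v != v' by apply/eqP => E; subst; rewrite ha in hb.
  exists a, a', v, v'; split.
  + by [].
  + by rewrite card4.
  + by rewrite eaa hc evv (sym v') hb.
  + by rewrite ha hd.
Qed.

Unset Implicit Arguments.

Theorem lemma5 (T : finType) (e : rel T) (u : nat -> T) (t : nat) (v v' : T) :
  reflexive_graph e -> is_walk e u t -> e v v' -> avoids_walk e v v' u t ->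
  let C0 := induces_C4 e [set u 0; u 1; v; v'] in
  let Ct := induces_C4 e [set u t.-1; u t; v; v'] in
  [/\ (~ C0 -> ~ Ct -> forall x y, x \in [:: v; v'] -> y \in [:: v; v'] ->
         impliesZ e (u 0, x) (u t, y)),
      (C0 -> ~ Ct -> forall x, x \in [:: v; v'] -> e (u 0) x ->
         forall y, y \in [:: v; v'] -> impliesZ e (u 0, x) (u t, y)) &
      (C0 -> Ct -> forall x y, x \in [:: v; v'] -> e (u 0) x ->
         y \in [:: v; v'] -> e (u t) y -> impliesZ e (u 0, x) (u t, y))].
Proof.
move=> G [t0 W] evv Av C0 Ct; subst C0 Ct.
have F : forall j, j < t -> facts e v v' (u j) (u j.+1).
  by move=> j hj; apply: facts_of => //; [exact: W | exact: Av].
have iter : forall X i n, i + n <= t -> Gd e v v' X (u i) -> Gd e v v' X (u (i + n)).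
  move=> X i; elim=> [|n IH] h Hg; first by rewrite addn0.
  have h' : i + n < t by rewrite -addnS.
  rewrite addnS; apply: (gd_step G evv (W _ h') (F _ h')).
  by apply: IH => //; exact: ltnW.
have tt : t.-1.+1 = t := prednK t0.
have tl : t.-1 < t by rewrite -[X in _ < X]tt.
have final : forall X, Gd e v v' X (u t.-1) -> ~ induces_C4 e [set u t.-1; u t; v; v'] ->
    forall y, y \in [:: v; v'] -> RZ e X (u t, y).
  move=> X Hg nC y hy.
  have Ft := F _ tl; have Wt := W _ tl; rewrite tt in Ft Wt.
  have NPt := notC4_NP G evv Wt Ft nC.
  have [_ f1 _ _ _] := Ft.
  have [hp Gp] := pp0P f1.
  apply: RZ_trans (Hg _ hp Gp) _.
  exact: (allEq G evv Wt Ft NPt hp hy).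
have [[d1 d2 _ _] _ _ _ _] := F 0 t0.
have start : forall x, x \in [:: v; v'] -> e (u 0) x -> Gd e v v' (u 0, x) (u 0).
  move=> x hx ex b hb Gb; rewrite -(Gb x hx ex); apply: RZ_refl.
  by move: hx; rewrite !inE => /orP[] /eqP -> /= /eqP; apply/negP.
split.
- move=> nC0 nCt x y hx hy; apply: RZ_impl.
  have NP0 := notC4_NP G evv (W 0 t0) (F 0 t0) nC0.
  have [t1|t2] := eqVneq t 1.
    by subst t; exact: (allEq G evv (W 0 t0) (F 0 t0) NP0 hx hy).
  have t2' : 1 <= t.-1 by rewrite -ltnS tt ltn_neqAle eq_sym t2 t0.
  have H1 : Gd e v v' (u 0, x) (u 1).
    by move=> b hb _; exact: (allEq G evv (W 0 t0) (F 0 t0) NP0 hx hb).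
  have := iter _ 1 (t.-1 - 1) _ H1; rewrite subnKC // => Hg.
  by apply: final => //; apply: Hg; rewrite -ltnS tt.
- move=> _ nCt x hx ex y hy; apply: RZ_impl.
  have := iter _ 0 t.-1 _ (start x hx ex); rewrite add0n => Hg.
  by apply: final => //; apply: Hg; exact: ltnW.
- move=> _ _ x y hx ex hy ey; apply: RZ_impl.
  have := iter _ 0 t _ (start x hx ex); rewrite add0n => Hg.
  have Ft := F _ tl; rewrite tt in Ft.
  have [_ _ f2 _ _] := Ft.
  have [hp Gp] := pp0P f2.
  apply: Hg => // c hc ec.
  by rewrite (Gp c hc ec) (Gp y hy ey).
Qed.
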